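(* Let $k\ge 2$ and let $U$ be an intersecting family of polynomials over $\mathbb{F}_q$ of degree at most $k$. Let $c,\alpha,\beta\in\mathbb{F}_q$ and suppose $U$ contains more than $(q-1)q^{k-2}$ polynomials $h_i$ whose coefficient of $x^k$ equals $c$ and which satisfy $h_i(\alpha)=\beta$. Then every polynomial $f\in U$ whose coefficient of $x^k$ is not $c$ satisfies $f(\alpha)=\beta$.
   Context: A set of polynomials over $\mathbb{F}_q$ is intersecting if for any two members $f_1,f_2$ the graphs $\{(x,f_i(x)):x\in\mathbb{F}_q\}$ share at least one point. *)

(* Defs.v *)
From HB Require Import structures.
From mathcomp Require Import all_boot all_order all_algebra all_field.
From mathcomp Require Import finmap.
Set Implicit Arguments. Unset Strict Implicit. Unset Printing Implicit Defensive.
Import GRing.Theory.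
Local Open Scope ring_scope.

Definition intersecting (F : finFieldType) (U : {fset {poly F}}) : Prop :=
  forall f1 f2 : {poly F}, f1 \in U -> f2 \in U -> exists x : F, f1.[x] = f2.[x].

(* Main.v *)
Require Import Defs.
From HB Require Import structures.
From mathcomp Require Import all_boot all_order all_algebra all_field.
From mathcomp Require Import finmap.
From mathcomp Require Import zify.
Import GRing.Theory.
Local Open Scope ring_scope.
Local Open Scope fset_scope.

Theorem lemma8 (F : finFieldType) (k : nat) (hk : (2 <= k)%N)
  (U : {fset {poly F}})
  (hdeg : forall f : {poly F}, f \in U -> (size f <= k.+1)%N)
  (hint : intersecting U)
  (c alpha beta : F)
  (hmany : ((#|F| - 1) * #|F| ^ (k - 2) <
            #|` [fset h | h in U & ((h`_k == c) && (h.[alpha] == beta))%R]|)%N) :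
  forall f : {poly F}, f \in U -> f`_k != c -> f.[alpha] = beta.
Proof.
move=> f fU fk; apply/eqP; apply/negPn/negP => fab.
set H := [fset h | h in U & _] in hmany.
have memH : forall h, h \in H -> [/\ h \in U, h`_k = c & h.[alpha] = beta].
  move=> h; rewrite !inE => /andP[hU /andP[/eqP -> /eqP ->]]; by split.
pose r (h : {poly F}) := odflt alpha [pick x | h.[x] == f.[x]].
have rP : forall h, h \in H -> h.[r h] = f.[r h] /\ r h != alpha.
  move=> h /memH [hU hk' ha].
  have [x hx] := hint _ _ hU fU.
  rewrite /r; case: pickP => [y /eqP /= hy | /(_ x) /=]; last by rewrite hx eqxx.
  split=> //; apply/eqP => ya; move: hy; rewrite ya ha => hy.
  by move: fab; rewrite hy eqxx.
pose phi (h : {poly F}) : F * {ffun 'I_(k-2) -> F} :=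
  (r h, [ffun i : 'I_(k-2) => h`_(i.+2)]).
have phi_inj : {in H &, injective phi}.
  move=> h1 h2 h1H h2H [e1 e2].
  have [h1U h1k h1a] := memH _ h1H; have [h2U h2k h2a] := memH _ h2H.
  have [r1 ra] := rP _ h1H; have [r2 _] := rP _ h2H.
  apply/eqP; rewrite -subr_eq0; apply/negPn/negP => nz.
  have := max_poly_roots nz (rs := [:: alpha; r h1]).
  rewrite /= !andbT /root !hornerD !hornerN h1a h2a subrr eqxx /=.
  have r2' : h2.[r h1] = f.[r h1] by rewrite e1.
  rewrite r1 r2' subrr eqxx inE eq_sym ra => /(_ isT isT).
  suff sz : (size (h1 - h2)%R <= 2)%N by move=> /leq_trans /(_ sz).
  apply/leq_sizeP => j j2; rewrite coefB.
  case: (ltngtP j k) => jk.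
  - have jlt : (j - 2 < k - 2)%N by lia.
    have := congr1 (fun g : {ffun 'I_(k-2) -> F} => g (Ordinal jlt)) e2.
    rewrite !ffunE /= (_ : (j - 2).+2 = j)%N; last by lia.
    by move=> ->; rewrite subrr.
  - rewrite !nth_default ?subrr //.
    + by apply: leq_trans (hdeg _ h2U) _.
    + by apply: leq_trans (hdeg _ h1U) _.
  - by rewrite jk h1k h2k subrr.
have : (#|` H| <= #|[set p : F * {ffun 'I_(k-2) -> F} | p.1 != alpha]|)%N.
  rewrite cardE -(size_map phi H).
  apply: uniq_leq_size.
    rewrite map_inj_in_uniq //; exact: fset_uniq.
  move=> p /mapP [h hH ->]; rewrite mem_enum inE /=.
  by have [_ ->] := rP _ hH.
move=> /(leq_trans hmany).
rewrite (_ : [set p : F * {ffun 'I_(k-2) -> F} | p.1 != alpha] = setX [set~ alpha] setT).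
  rewrite cardsX cardsC1 cardsT card_ffun card_ord.
  by rewrite subn1 ltnn.
by apply/setP => -[x g]; rewrite in_setX in_setT andbT in_setC1 in_set.
Qed.
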